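(* Consider the downtown bathtub model under perimeter control described in the context, with a fixed number $N_s$ of suburban commuters satisfying $N_s>\alpha n_j\left(\frac1\beta+\frac1\gamma\right)\left(\ln 2-\frac12\right)$, and let $C_s^{bp*}$ be the short-run equilibrium bathtub cost, $\theta^p\equiv\frac{C_s^{bp*}v_f}{\alpha L}$. Then (i) $$F^p(\theta^p)\equiv N_s-\alpha n_j\left(\frac1\beta+\frac1\gamma\right)\left(\frac{\theta^p}{4}+\ln 2-1\right)=0;$$ (ii) a queue develops at the perimeter boundary, and its length increases toward the desired arrival time $t^*$ (and decreases after it).
   Context: Downtown traffic: accumulation $n(t)\ge0$ evolves as $\dot n(t)=I(t)-G(t)$ with outflow $G(t)=n(t)v(t)/L$, $L>0$ the trip length, speed $v(t)=v_f(1-n(t)/n_j)$, $v_f,n_j>0$; downtown travel time $T(t)=L/v(t)$. Perimeter control: the critical accumulation is $n_j/2$; the inflow into the downtown area is $I(t)=I_p:=\frac{n_jv_f}{4L}$ when $n(t)=n_j/2$ and $I(t)=A_b(t)$ (the arrival rate of vehicles at the perimeter boundary) when $n(t)<n_j/2$. Vehicles that cannot enter wait in a first-in-first-out point queue at the boundary; if $q(t)$ is the number of queued vehicles when the commuter arriving at work at $t$ reaches the boundary, that commuter's waiting time is $T_w(t)=q(t)/I_p$. With $[t_s^p,t_e^p]$ the period during which control is active, the downtown travel time is $T^p(t)=T(t)$ for $t\le t_s^p$ or $t>t_e^p$ and $T^p(t)=\frac{L}{v_f/2}+T_w(t)$ for $t_s^p<t\le t_e^p$. A suburban commuter arriving at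 time $t$ has bathtub cost $C_s^{bp}(t)=\alpha T^p(t)+s(t)$, where $s(t)=\beta(t^*-t)$ for $t\le t^*$, $s(t)=\gamma(t-t^* )$ for $t>t^*$, $\alpha,\beta,\gamma>0$, $t^*$ the desired arrival time. A short-run equilibrium under perimeter control is $(n(\cdot),q(\cdot),C_s^{bp*})$ with $C_s^{bp}(t)=C_s^{bp*}$ if $n(t)>0$ and $\ge C_s^{bp*}$ if $n(t)=0$; $n(t)=n_j/2$ if $q(t)>0$ and $n(t)\le n_j/2$ if $q(t)=0$; and $\int_{\mathbb{R}}n(t)v(t)/L\,dt=N_s$. *)

(* Defs.v *)
From Stdlib Require Import Reals.
From Coquelicot Require Import Coquelicot.
Open Scope R_scope.

Definition speed (vf nj n : R) : R := vf * (1 - n / nj).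

Definition outflow (L vf nj n : R) : R := n * speed vf nj n / L.

Definition Ip (L vf nj : R) : R := nj * vf / (4 * L).

Definition sdelay (beta gamma tstar t : R) : R :=
  if Rle_dec t tstar then beta * (tstar - t) else gamma * (t - tstar).

(* downtown travel time under perimeter control T^p(t), control active on
   [ts, te]; waiting time T_w(t) = q(t) / I_p *)
Definition Tp (L vf nj ts te : R) (n q : R -> R) (t : R) : R :=
  if Rlt_dec ts t then
    (if Rle_dec t te then L / (vf / 2) + q t / Ip L vf nj
     else L / speed vf nj (n t))
  else L / speed vf nj (n t).

Definition Cbp (L vf nj alpha beta gamma tstar ts te : R) (n q : R -> R)
  (t : R) : R :=
  alpha * Tp L vf nj ts te n q t + sdelay beta gamma tstar t.

(* [ts, te] is the period during which control is active, i.e. the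
   accumulation sits at the critical value n_j / 2 *)
Definition control_period (nj ts te : R) (n : R -> R) : Prop :=
  forall t, n t = nj / 2 <-> ts <= t <= te.

Definition is_equilibrium (L vf nj alpha beta gamma tstar ts te Ns : R)
  (n q : R -> R) (Cstar : R) : Prop :=
  (forall t, 0 <= n t) /\
  (forall t, 0 <= q t) /\
  (forall t, 0 < n t -> Cbp L vf nj alpha beta gamma tstar ts te n q t = Cstar) /\
  (forall t, n t = 0 -> Cstar <= Cbp L vf nj alpha beta gamma tstar ts te n q t) /\
  (forall t, 0 < q t -> n t = nj / 2) /\
  (forall t, q t = 0 -> n t <= nj / 2) /\
  is_RInt_gen (fun t => outflow L vf nj (n t))
    (Rbar_locally m_infty) (Rbar_locally p_infty) Ns.

Definition Fp (alpha beta gamma nj Ns theta : R) : R :=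
  Ns - alpha * nj * (1 / beta + 1 / gamma) * (theta / 4 + ln 2 - 1).

(* Main.v *)
Require Import Defs.
From Stdlib Require Import Reals Lra.
From Coquelicot Require Import Coquelicot.
Open Scope R_scope.

Definition H (x : R) : R :=
  if Rle_dec x 1 then 0 else if Rle_dec x 2 then (x - 1) / (x * x) else 1 / 4.
Definition P (x : R) : R :=
  if Rle_dec x 1 then 0 else if Rle_dec x 2 then ln x + 1 / x - 1
  else ln 2 - 1 / 2 + (x - 2) / 4.

Lemma H_low a b : a <= b <= 1 -> is_RInt H a b (P b - P a).
Proof.
  intros [Hab Hb].
  assert (E : P b - P a = scal (b - a) 0).
  { unfold P. destruct (Rle_dec b 1); [|lra]. destruct (Rle_dec a 1); [|lra].
    unfold scal; simpl; unfold mult; simpl; ring. }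
  rewrite E. apply is_RInt_ext with (fun _ => 0). 2: apply (@is_RInt_const R_NormedModule).
  intros x Hx. rewrite Rmin_left in Hx by lra. rewrite Rmax_right in Hx by lra.
  unfold H. destruct (Rle_dec x 1); [reflexivity|lra].
Qed.

Lemma H_high a b : 2 <= a <= b -> is_RInt H a b (P b - P a).
Proof.
  intros [Ha Hab].
  assert (E : P b - P a = scal (b - a) (1/4)).
  { unfold P. destruct (Rle_dec b 1); [lra|]. destruct (Rle_dec a 1); [lra|].
    destruct (Rle_dec b 2); destruct (Rle_dec a 2);
    unfold scal; simpl; unfold mult; simpl.
    - assert (a = 2) by lra. assert (b = 2) by lra. subst. field.
    - lra.
    - assert (a = 2) by lra. subst. field.
    - field. }
  rewrite E. apply is_RInt_ext with (fun _ => 1/4). 2: apply (@is_RInt_const R_NormedModule).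
  intros x Hx. rewrite Rmin_left in Hx by lra. rewrite Rmax_right in Hx by lra.
  unfold H. destruct (Rle_dec x 1); [lra|]. destruct (Rle_dec x 2); [lra|reflexivity].
Qed.

Lemma P_mid x : 1 <= x <= 2 -> P x = ln x + 1 / x - 1.
Proof.
  intros Hx. unfold P. destruct (Rle_dec x 1).
  - assert (x = 1) by lra. subst. rewrite ln_1. field.
  - destruct (Rle_dec x 2); [reflexivity|lra].
Qed.

Lemma H_mid a b : 1 <= a <= b -> b <= 2 -> is_RInt H a b (P b - P a).
Proof.
  intros [Ha Hab] Hb.
  assert (E : P b - P a = minus ((fun x => ln x + 1 / x) b) ((fun x => ln x + 1/x) a)).
  { rewrite !P_mid by lra. unfold minus, plus, opp; simpl. ring. }
  rewrite E. apply is_RInt_ext with (fun x => (x - 1) / (x * x)).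
  { intros x Hx. rewrite Rmin_left in Hx by lra. rewrite Rmax_right in Hx by lra.
    unfold H. destruct (Rle_dec x 1); [lra|]. destruct (Rle_dec x 2); [reflexivity|lra]. }
  apply (@is_RInt_derive R_CompleteNormedModule (fun x => ln x + 1 / x)).
  - intros x Hx. rewrite Rmin_left in Hx by lra. rewrite Rmax_right in Hx by lra.
    auto_derive. lra. unfold Rdiv. field. lra.
  - intros x Hx. rewrite Rmin_left in Hx by lra. rewrite Rmax_right in Hx by lra.
    apply (@ex_derive_continuous R_AbsRing R_NormedModule). auto_derive. nra.
Qed.

Lemma chas a m b : is_RInt H a m (P m - P a) -> is_RInt H m b (P b - P m) ->
  is_RInt H a b (P b - P a).
Proof.
  intros H1 H2. replace (P b - P a) with (plus (P m - P a) (P b - P m)).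
  apply (is_RInt_Chasles H a m b); auto.
  unfold plus; simpl. ring.
Qed.

Lemma H_ge1 a b : 1 <= a <= b -> is_RInt H a b (P b - P a).
Proof.
  intros [Ha Hab]. destruct (Rle_dec b 2).
  - apply H_mid; lra.
  - destruct (Rle_dec 2 a).
    + apply H_high; lra.
    + apply chas with 2. apply H_mid; lra. apply H_high; lra.
Qed.

Lemma H_le a b : a <= b -> is_RInt H a b (P b - P a).
Proof.
  intros Hab. destruct (Rle_dec b 1).
  - apply H_low; lra.
  - destruct (Rle_dec a 1).
    + apply chas with 1. apply H_low; lra. apply H_ge1; lra.
    + apply H_ge1; lra.
Qed.

Lemma H_int a b : is_RInt H a b (P b - P a).
Proof.
  destruct (Rle_dec a b). apply H_le; auto.
  replace (P b - P a) with (opp (P a - P b)).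
  apply (@is_RInt_swap R_NormedModule). apply H_le; lra.
  unfold opp; simpl. ring.
Qed.

Lemma P_low x : x <= 1 -> P x = 0.
Proof. intros. unfold P. destruct (Rle_dec x 1); [reflexivity|lra]. Qed.

Lemma t_int (c K beta gamma tstar th a b : R) :
  0 < K -> 0 < beta -> 0 < gamma ->
  a <= tstar - K * (Rabs th + 1) / beta ->
  tstar + K * (Rabs th + 1) / gamma <= b ->
  is_RInt (fun t => c * H (th - sdelay beta gamma tstar t / K)) a b
    (c * K * (1 / beta + 1 / gamma) * P th).
Proof.
  intros HK Hb Hg Ha Hbb.
  pose proof (Rle_abs th) as Habs.
  pose (u := beta / K). pose (v := th - beta * tstar / K).
  pose (u' := - gamma / K). pose (v' := th + gamma * tstar / K).
  assert (HL := H_int (u * a + v) (u * tstar + v)).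
  apply is_RInt_comp_lin in HL.
  apply (is_RInt_scal _ _ _ (c * K / beta)) in HL.
  assert (HR := H_int (u' * tstar + v') (u' * b + v')).
  apply is_RInt_comp_lin in HR.
  apply (is_RInt_scal _ _ _ (- c * K / gamma)) in HR.
  assert (E1 : u * tstar + v = th) by (unfold u, v; field; lra).
  assert (E2 : u' * tstar + v' = th) by (unfold u', v'; field; lra).
  assert (E3 : u * a + v <= 1).
  { assert (Hq : beta / K * (K * (Rabs th + 1) / beta) <= beta / K * (tstar - a)).
    { apply Rmult_le_compat_l. apply Rlt_le, Rdiv_lt_0_compat; lra. lra. }
    replace (beta / K * (K * (Rabs th + 1) / beta)) with (Rabs th + 1) in Hq by (field; lra).
    replace (u * a + v) with (th - beta / K * (tstar - a)) by (unfold u, v; field; lra).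
    lra. }
  assert (E4 : u' * b + v' <= 1).
  { assert (Hq : gamma / K * (K * (Rabs th + 1) / gamma) <= gamma / K * (b - tstar)).
    { apply Rmult_le_compat_l. apply Rlt_le, Rdiv_lt_0_compat; lra. lra. }
    replace (gamma / K * (K * (Rabs th + 1) / gamma)) with (Rabs th + 1) in Hq by (field; lra).
    replace (u' * b + v') with (th - gamma / K * (b - tstar)) by (unfold u', v'; field; lra).
    lra. }
  rewrite E1, (P_low (u*a+v) E3) in HL.
  rewrite E2, (P_low (u'*b+v') E4) in HR.
  assert (Hab : tstar <= b).
  { assert (0 <= K * (Rabs th + 1) / gamma). apply Rle_mult_inv_pos.
    pose proof (Rabs_pos th); nra. lra. lra. }
  assert (Haa : a <= tstar).
  { assert (0 <= K * (Rabs th + 1) / beta). apply Rle_mult_inv_pos.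
    pose proof (Rabs_pos th); nra. lra. lra. }
  replace (c * K * (1 / beta + 1 / gamma) * P th) with
    (plus (scal (c * K / beta) (P th - 0)) (scal (- c * K / gamma) (0 - P th))).
  2: { unfold plus, scal; simpl; unfold mult; simpl. field. lra. }
  apply (@is_RInt_Chasles R_NormedModule _ a tstar b).
  - eapply is_RInt_ext; [|exact HL].
    intros x Hx. rewrite Rmin_left in Hx by lra. rewrite Rmax_right in Hx by lra.
    unfold scal; simpl; unfold mult; simpl. unfold sdelay.
    destruct (Rle_dec x tstar); [|lra].
    replace (u * x + v) with (th - beta * (tstar - x) / K) by (unfold u, v; field; lra).
    unfold u. field. lra.
  - eapply is_RInt_ext; [|exact HR].
    intros x Hx. rewrite Rmin_left in Hx by lra. rewrite Rmax_right in Hx by lra.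
    unfold scal; simpl; unfold mult; simpl. unfold sdelay.
    destruct (Rle_dec x tstar); [lra|].
    replace (u' * x + v') with (th - gamma * (x - tstar) / K) by (unfold u', v'; field; lra).
    unfold u'. field. lra.
Qed.

Lemma gen_int (g : R -> R) A B V :
  (forall a b, a <= A -> B <= b -> is_RInt g a b V) ->
  is_RInt_gen g (Rbar_locally m_infty) (Rbar_locally p_infty) V.
Proof.
  intros Hg. unfold is_RInt_gen, filterlimi, filter_le, filtermapi.
  intros Q HQ.
  apply Filter_prod with (fun a => a < A) (fun b => B < b).
  - exists A. auto.
  - exists B. auto.
  - intros x y Hx Hy. exists V. split.
    + apply Hg; simpl; lra.
    + apply locally_singleton. exact HQ.
Qed.

Lemma H_ge2 x : 2 <= x -> H x = 1 / 4.
Proof.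
  intros. unfold H. destruct (Rle_dec x 1); [lra|]. destruct (Rle_dec x 2).
  assert (x = 2) by lra. subst. field. reflexivity.
Qed.

Lemma H_nonneg x : 0 <= H x.
Proof.
  unfold H. destruct (Rle_dec x 1); [lra|]. destruct (Rle_dec x 2); [|lra].
  apply Rle_mult_inv_pos. lra. nra.
Qed.

Lemma P_le2 th : th <= 2 -> P th <= ln 2 - 1 / 2.
Proof.
  intros Hth. pose proof ln_lt_2.
  destruct (Rle_dec th 1). rewrite P_low by auto. lra.
  assert (0 <= P 2 - P th).
  { apply (is_RInt_ge_0 H th 2). auto. apply H_int. intros; apply H_nonneg. }
  rewrite P_mid in H1 by lra. lra.
Qed.

Lemma P_gt2 th : 2 < th -> P th = ln 2 - 1 / 2 + (th - 2) / 4.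
Proof. intros. unfold P. destruct (Rle_dec th 1); [lra|]. destruct (Rle_dec th 2); [lra|reflexivity]. Qed.

From Stdlib Require Import FunctionalExtensionality.

Theorem lemma4 (L vf nj alpha beta gamma tstar Ns ts te : R)
  (n q : R -> R) (Cstar : R) :
  0 < L -> 0 < vf -> 0 < nj -> 0 < alpha -> 0 < beta -> 0 < gamma ->
  Ns > alpha * nj * (1 / beta + 1 / gamma) * (ln 2 - 1 / 2) ->
  control_period nj ts te n ->
  is_equilibrium L vf nj alpha beta gamma tstar ts te Ns n q Cstar ->
  let thetap := Cstar * vf / (alpha * L) in
  Fp alpha beta gamma nj Ns thetap = 0 /\
  (exists t, 0 < q t) /\
  (forall t1 t2, ts < t1 -> t1 < t2 -> t2 <= tstar -> q t1 < q t2) /\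
  (forall t1 t2, tstar <= t1 -> t1 < t2 -> t2 <= te -> q t2 < q t1).
Proof.
  intros HL Hvf Hnj Ha Hb Hg HNs Hcp Heq. cbv zeta.
  destruct Heq as (Hn0 & Hq0 & Hcost & Hcost0 & Hqn & Hqn2 & Hint).
  set (th := Cstar * vf / (alpha * L)).
  set (K := alpha * L / vf).
  assert (HK : 0 < K) by (unfold K; apply Rdiv_lt_0_compat; [apply Rmult_lt_0_compat|]; lra).
  set (X := fun t => th - sdelay beta gamma tstar t / K).
  assert (Hle : forall t, n t <= nj / 2).
  { intros t. destruct (Rle_lt_or_eq_dec 0 (q t) (Hq0 t)) as [h|h].
    - rewrite (Hqn t h). lra.
    - apply Hqn2. auto. }
  assert (Hctrl : forall t, ts < t <= te -> q t = nj / 4 * (X t - 2)).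
  { intros t Ht. assert (En : n t = nj / 2) by (apply Hcp; lra).
    assert (Hc := Hcost t ltac:(lra)). unfold Cbp, Tp in Hc.
    destruct (Rlt_dec ts t); [|lra]. destruct (Rle_dec t te); [|lra].
    unfold X, th. rewrite <- Hc. unfold Ip, K. field. lra. }
  assert (Hts : ts <= te -> X ts = 2).
  { intros Ht. assert (En : n ts = nj / 2) by (apply Hcp; lra).
    assert (Hc := Hcost ts ltac:(lra)). unfold Cbp, Tp in Hc.
    destruct (Rlt_dec ts ts); [lra|].
    rewrite En in Hc. replace (speed vf nj (nj / 2)) with (vf / 2) in Hc
      by (unfold speed; field; lra).
    unfold X, th. rewrite <- Hc. unfold K. field. lra. }
  assert (Hpt : forall t, outflow L vf nj (n t) = nj * vf / L * H (X t) /\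
                          (n t < nj / 2 -> X t < 2)).
  { intros t. destruct (Req_dec (n t) (nj / 2)) as [E|E].
    - split; [|intro; lra].
      assert (Hin : ts <= t <= te) by (apply Hcp; auto).
      assert (HX : 2 <= X t).
      { destruct (Rlt_dec ts t).
        - pose proof (Hctrl t ltac:(lra)). pose proof (Hq0 t). nra.
        - replace t with ts by lra. rewrite Hts by lra. lra. }
      rewrite H_ge2 by auto. unfold outflow, speed. rewrite E. field. lra.
    - assert (Elt : n t < nj / 2) by (pose proof (Hle t); lra).
      assert (ET : Tp L vf nj ts te n q t = L / speed vf nj (n t)).
      { unfold Tp. destruct (Rlt_dec ts t); [|reflexivity].
        destruct (Rle_dec t te); [|reflexivity]. exfalso; apply E; apply Hcp; lra. }
      destruct (Rle_lt_or_eq_dec 0 (n t) (Hn0 t)) as [Hp|Hz].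
      + assert (Hc := Hcost t Hp). unfold Cbp in Hc. rewrite ET in Hc.
        assert (HX : X t = nj / (nj - n t)).
        { unfold X, th. rewrite <- Hc. unfold speed, K. field.
          repeat split; lra. }
        assert (HX1 : X t - 1 = n t / (nj - n t)) by (rewrite HX; field; lra).
        assert (HX2 : 2 - X t = (nj - 2 * n t) / (nj - n t)) by (rewrite HX; field; lra).
        assert (0 < n t / (nj - n t)) by (apply Rdiv_lt_0_compat; lra).
        assert (0 < (nj - 2 * n t) / (nj - n t)) by (apply Rdiv_lt_0_compat; lra).
        split; [|intros; lra].
        unfold H. destruct (Rle_dec (X t) 1); [lra|]. destruct (Rle_dec (X t) 2); [|lra].
        rewrite HX. unfold outflow, speed. field. lra.
      + assert (Hc := Hcost0 t (eq_sym Hz)). unfold Cbp in Hc. rewrite ET in Hc.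
        rewrite <- Hz in Hc. replace (speed vf nj 0) with vf in Hc by (unfold speed; field; lra).
        assert (HX1 : X t - 1 = (Cstar - (alpha * (L / vf) + sdelay beta gamma tstar t)) * / K)
          by (unfold X, th, K; field; lra).
        assert (0 < / K) by (apply Rinv_0_lt_compat; auto).
        assert (X t <= 1) by nra.
        split; [|intros; lra].
        unfold H. destruct (Rle_dec (X t) 1); [|lra].
        unfold outflow. rewrite <- Hz. unfold Rdiv. ring. }
  assert (Ef : (fun t => outflow L vf nj (n t)) = (fun t => nj * vf / L * H (X t))).
  { apply functional_extensionality. intros t. apply Hpt. }
  rewrite Ef in Hint.
  pose (A := tstar - K * (Rabs th + 1) / beta).
  pose (B := tstar + K * (Rabs th + 1) / gamma).
  assert (Hgen := gen_int (fun t => nj * vf / L * H (X t)) A B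
     (nj * vf / L * K * (1 / beta + 1 / gamma) * P th)
     (fun a b Ha Hb' => t_int (nj * vf / L) K beta gamma tstar th a b HK Hb Hg Ha Hb')).
  apply (@is_RInt_gen_unique R_CompleteNormedModule) in Hint; [|apply Proper_StrongProper, Rbar_locally_filter|apply Proper_StrongProper, Rbar_locally_filter].
  apply (@is_RInt_gen_unique R_CompleteNormedModule) in Hgen; [|apply Proper_StrongProper, Rbar_locally_filter|apply Proper_StrongProper, Rbar_locally_filter].
  rewrite Hint in Hgen.
  assert (HNsV : Ns = alpha * nj * (1 / beta + 1 / gamma) * P th).
  { rewrite Hgen. unfold K. field. repeat split; lra. }
  assert (HD : 0 < alpha * nj * (1 / beta + 1 / gamma)).
  { apply Rmult_lt_0_compat. apply Rmult_lt_0_compat; lra.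
    assert (0 < 1 / beta) by (apply Rdiv_lt_0_compat; lra).
    assert (0 < 1 / gamma) by (apply Rdiv_lt_0_compat; lra). lra. }
  assert (Hth2 : 2 < th).
  { destruct (Rle_dec th 2) as [h|h]; [|lra].
    exfalso. apply P_le2 in h.
    assert (alpha * nj * (1 / beta + 1 / gamma) * P th <=
            alpha * nj * (1 / beta + 1 / gamma) * (ln 2 - 1 / 2))
      by (apply Rmult_le_compat_l; lra).
    lra. }
  assert (HXs : X tstar = th).
  { unfold X, sdelay. destruct (Rle_dec tstar tstar); [|lra].
    replace (tstar - tstar) with 0 by ring. unfold Rdiv. ring. }
  assert (Hst : ts <= tstar <= te).
  { apply Hcp. destruct (Req_dec (n tstar) (nj / 2)); auto.
    assert (hl : n tstar < nj / 2) by (pose proof (Hle tstar); lra).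
    apply Hpt in hl. lra. }
  assert (Hts2 : ts < tstar).
  { destruct (Req_dec ts tstar) as [h|h]; [|lra].
    pose proof (Hts ltac:(lra)) as hx. rewrite h in hx. lra. }
  assert (Xinc : forall t1 t2, t1 < t2 <= tstar -> X t1 < X t2).
  { intros t1 t2 Ht. unfold X, sdelay.
    destruct (Rle_dec t1 tstar); [|lra]. destruct (Rle_dec t2 tstar); [|lra].
    assert (beta * (tstar - t2) < beta * (tstar - t1)) by (apply Rmult_lt_compat_l; lra).
    assert (beta * (tstar - t2) / K < beta * (tstar - t1) / K)
      by (apply Rmult_lt_compat_r; [apply Rinv_0_lt_compat|]; lra).
    lra. }
  assert (Xdec : forall t1 t2, tstar <= t1 -> t1 < t2 -> X t2 < X t1).
  { intros t1 t2 H1 H2. unfold X, sdelay.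
    destruct (Rle_dec t2 tstar); [lra|].
    destruct (Rle_dec t1 tstar).
    - assert (t1 = tstar) by lra. subst t1. replace (tstar - tstar) with 0 by ring.
      assert (0 < gamma * (t2 - tstar)) by (apply Rmult_lt_0_compat; lra).
      assert (0 < gamma * (t2 - tstar) / K) by (apply Rdiv_lt_0_compat; lra).
      unfold Rdiv at 1. lra.
    - assert (gamma * (t1 - tstar) < gamma * (t2 - tstar)) by (apply Rmult_lt_compat_l; lra).
      assert (gamma * (t1 - tstar) / K < gamma * (t2 - tstar) / K)
        by (apply Rmult_lt_compat_r; [apply Rinv_0_lt_compat|]; lra).
      lra. }
  split; [|split; [|split]].
  - unfold Fp. rewrite HNsV, P_gt2 by auto. field; lra.
  - exists tstar. rewrite Hctrl by lra. rewrite HXs. nra.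
  - intros t1 t2 H1 H2 H3. rewrite !Hctrl by lra.
    assert (X t1 < X t2) by (apply Xinc; lra). nra.
  - intros t1 t2 H1 H2 H3. rewrite !Hctrl by lra.
    assert (X t2 < X t1) by (apply Xdec; lra). nra.
Qed.
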